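(* Let $d\ge 2$ and let $G=(V,E)$ be any graph on $n$ vertices with maximum degree at most $d$. Let $\varepsilon>0$, let $p<(1-\varepsilon)/(d-1)$ be a contagion probability, and let $I_0\subseteq V$ be nonempty. Consider the Reed–Frost SIR process on $G$ with initial infectious set $I_0$ and contagion probability $p$. Then there is a constant $C>0$, depending only on $\varepsilon$, such that with high probability the process stops within $C\log n$ time steps and the total number of nodes that are ever infectious is at most $C|I_0|\log n$.
   Context: **Reed–Frost SIR process.** Let $G=(V,E)$ be a graph, $p\in[0,1]$ the contagion probability, and $I_0\subseteq V$ the initially infectious set. Time is discrete. At each time every node is in exactly one of three states: susceptible, infectious, or recovered. At time $0$ the nodes of $I_0$ are infectious and all other nodes are susceptible. At each step $t\to t+1$: - each node $u$ that is infectious at time $t$ independently, for each edge $\{u,v\}$ with $v$ susceptible at time $t$, infects $v$ with probability $p$; - a susceptible node infected by at least one neighbour becomes infectious at time $t+1$; - every node infectious at time $t$ becomes recovered at time $t+1$; - all other nodes keep their state. The process stops when there are no infectious nodes. **With high probability.** An event holds with high probability if it holds with probability at least $1-n^{-\Omega(1)}$, where $n=|V|$. *)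

(* Defs.v *)
From HB Require Import structures.
From mathcomp Require Import all_boot all_order all_algebra.
From mathcomp Require Import reals exp.
Set Implicit Arguments. Unset Strict Implicit. Unset Printing Implicit Defensive.
Import Order.TTheory GRing.Theory Num.Theory.
Local Open Scope ring_scope.

Inductive sir := Sus | Inf | Rec.

Definition sir_eqb (a b : sir) : bool :=
  match a, b with
  | Sus, Sus | Inf, Inf | Rec, Rec => true
  | _, _ => false
  end.
Lemma sir_eqP : Equality.axiom sir_eqb.
Proof. by case; case; constructor. Qed.
HB.instance Definition _ := hasDecEq.Build sir sir_eqP.

Section ReedFrost.
Variables (T : finType) (e : rel T) (I0 : {set T}).

(* Sample space: one independent Bernoulli(p) coin for every time step
   t < #|T| and every ordered pair (u, v); coin (t,u,v) decides whether an
   infectious u infects a susceptible neighbour v during step t -> t+1.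
   The process always stops by time #|T| (the infectious sets at different
   times are disjoint and nonempty until the process stops), so #|T| time
   steps of coins suffice. *)
Definition outcome := {ffun 'I_#|T| * T * T -> bool}.

Definition coin (w : outcome) (t : nat) (u v : T) : bool :=
  if (insub t : option 'I_#|T|) is Some i then w (i, u, v) else false.

Fixpoint rf_state (w : outcome) (t : nat) : T -> sir :=
  match t with
  | 0 => fun v => if v \in I0 then Inf else Sus
  | t'.+1 =>
      let s := rf_state w t' in
      fun v => match s v with
               | Inf => Rec
               | Rec => Rec
               | Sus => if [exists u, [&& s u == Inf, e u v & coin w t' u v]]
                        then Inf else Sus
               end
  end.

Definition rf_stopped (w : outcome) (t : nat) : bool :=
  [forall v, rf_state w t v != Inf].

(* nodes that are ever infectious (all times up to #|T|, after which the
   process has necessarily stopped) *)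
Definition rf_ever_infected (w : outcome) : {set T} :=
  [set v | [exists t : 'I_#|T|.+1, rf_state w t v == Inf]].

End ReedFrost.

Section Prob.
Variables (R : realType) (T : finType) (p : R).

Definition rf_weight (w : outcome T) : R :=
  \prod_(k : 'I_#|T| * T * T) (if w k then p else 1 - p).

Definition rf_prob (E : pred (outcome T)) : R :=
  \sum_(w : outcome T | E w) rf_weight w.
End Prob.

Definition rf_good (R : realType) (T : finType) (e : rel T) (I0 : {set T})
    (C : R) (w : outcome T) : bool :=
  [exists t : 'I_#|T|.+1,
      ((nat_of_ord t)%:R <= C * ln (#|T|%:R : R)) && rf_stopped e I0 w t]
  && ((#|rf_ever_infected e I0 w|%:R : R) <= C * #|I0|%:R * ln (#|T|%:R : R)).

(* Main.v *)
Require Import Defs.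
From HB Require Import structures.
From mathcomp Require Import all_boot all_order all_algebra.
From mathcomp Require Import reals exp.
From mathcomp Require Import ring lra zify sequences.
From Stdlib Require Import FunctionalExtensionality.
Set Implicit Arguments. Unset Strict Implicit. Unset Printing Implicit Defensive.
Import Order.TTheory GRing.Theory Num.Theory.
Local Open Scope ring_scope.

Section Proc.
Variables (T : finType) (e : rel T) (I0 : {set T}).

Definition step (s : T -> sir) (c : {ffun T * T -> bool}) : T -> sir :=
  fun v => match s v with
           | Inf => Rec | Rec => Rec
           | Sus => if [exists u, [&& s u == Inf, e u v & c (u, v)]] then Inf else Sus
           end.

Definition lay (w : outcome T) (t : nat) : {ffun T * T -> bool} :=
  [ffun x => coin w t x.1 x.2].

Lemma state_S w t : rf_state e I0 w t.+1 = step (rf_state e I0 w t) (lay w t).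
Proof.
apply: functional_extensionality => v /=; rewrite /step.
case: (rf_state e I0 w t v) => //.
by congr (if _ then _ else _); apply: eq_existsb => u; rewrite ffunE.
Qed.

Lemma sum_pair (F : T * T -> nat) : \sum_x F x = \sum_u \sum_v F (u, v).
Proof. by rewrite pair_big /=; apply: eq_bigr => -[]. Qed.

Definition cntI (s : T -> sir) : nat := \sum_v (s v == Inf).
Definition cntR (s : T -> sir) : nat := \sum_v (s v == Rec).
Definition cntN (s : T -> sir) : nat := \sum_v (s v != Sus).
Definition inS (s : T -> sir) (x : T * T) : bool :=
  [&& s x.1 == Inf, s x.2 == Sus & e x.1 x.2].
Definition kS (s : T -> sir) : nat := \sum_x inS s x.

Lemma cntR_step s c : cntR (step s c) = (cntR s + cntI s)%N.
Proof.
rewrite /cntR /cntI -big_split /=; apply: eq_bigr => v _.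
rewrite /step; case: (s v) => //=.
by case: ifP.
Qed.

Lemma cntI_step s c : (cntI (step s c) <= \sum_x (inS s x && c x))%N.
Proof.
rewrite /cntI sum_pair.
rewrite exchange_big /=; apply: leq_sum => v _.
rewrite /step; case sv: (s v) => //.
case: ifP => // /existsP [u /and3P [su euv cuv]].
rewrite (bigD1 u) //= /inS /= su sv euv cuv; by [].
Qed.

Lemma cntN_step s c : (cntN s + cntI (step s c) <= cntN (step s c))%N.
Proof.
rewrite /cntN /cntI -big_split /=; apply: leq_sum => v _.
rewrite /step; case: (s v) => //.
by case: ifP.
Qed.

Lemma cntIN s : (cntI s <= cntN s)%N.
Proof. by apply: leq_sum => v _; case: (s v). Qed.

Definition inv (s : T -> sir) := forall v, s v = Inf -> exists u, s u = Rec /\ e v u.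

Lemma inv_step s c : symmetric e -> inv (step s c).
Proof.
move=> esym v; rewrite /step; case sv: (s v) => //.
case: ifP => // /existsP [u /and3P [/eqP su euv cuv]] _.
exists u; split; first by rewrite su.
by rewrite esym.
Qed.

Variable d : nat.
Hypothesis deg : forall v : T, (#|[set u | e v u]| <= d)%N.

Lemma kS_le s : (kS s <= d * cntI s)%N.
Proof.
rewrite /kS sum_pair /cntI.
rewrite big_distrr /=; apply: leq_sum => u _.
rewrite /inS /=; case: (s u =P Inf) => _ /=; last by rewrite big1.
rewrite muln1; apply: leq_trans (deg u).
rewrite -sum1_card [X in (_ <= X)%N]big_mkcond /=; apply: leq_sum => v _.
by rewrite inE; case: (e u v); rewrite ?andbF ?andbT //; case: (_ == _).
Qed.

Lemma kS_le_inv s : inv s -> (kS s <= d.-1 * cntI s)%N.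
Proof.
move=> hinv.
rewrite /kS sum_pair /cntI.
rewrite big_distrr /=; apply: leq_sum => u _.
rewrite /inS /=; case: (s u =P Inf) => hu /=; last by rewrite big1.
have [w [sw euw]] := hinv u hu.
rewrite muln1; have := deg u; rewrite (cardsD1 w) inE euw add1n => h.
have : (#|[set x | e u x] :\ w| <= d.-1)%N by rewrite -ltnS (leq_trans h) // leqSpred.
apply: leq_trans.
rewrite -sum1_card [X in (_ <= X)%N]big_mkcond /=; apply: leq_sum => v _.
rewrite !inE; case: (v =P w) => [->|_]; first by rewrite sw.
by case: (e u v); rewrite ?andbF ?andbT //; case: (_ == _).
Qed.

Lemma coin_ord w (i : 'I_#|T|) u v : coin w i u v = w (i, u, v).
Proof.
rewrite /coin; case: insubP => [j _ /val_inj -> //|]; by rewrite ltn_ord.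
Qed.

Definition upd (w : outcome T) (i : 'I_#|T|) (c : {ffun T * T -> bool}) : outcome T :=
  [ffun k : 'I_#|T| * T * T => if k.1.1 == i then c (k.1.2, k.2) else w k].
Definition layi (w : outcome T) (i : 'I_#|T|) : {ffun T * T -> bool} :=
  [ffun x => w (i, x.1, x.2)].

Lemma layi_upd w i c : layi (upd w i c) i = c.
Proof. by apply/ffunP => -[u v]; rewrite !ffunE /= eqxx. Qed.

Lemma upd_upd w i c : upd (upd w i c) i (layi w i) = w.
Proof.
apply/ffunP => -[[j u] v]; rewrite !ffunE /=.
by case: (j =P i) => [->|]; rewrite ?ffunE.
Qed.

Lemma state_upd_le w (i : 'I_#|T|) c t : (t <= i)%N -> rf_state e I0 (upd w i c) t = rf_state e I0 w t.
Proof.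
elim: t => [//|t IH] lt; rewrite !state_S IH ?(ltnW lt) //.
congr step; apply/ffunP => -[u v]; rewrite !ffunE /= /coin.
case: insubP => [j _ vj|//]; rewrite ffunE /=.
case: (j =P i) => // ji; by move: lt; rewrite -vj ji ltnn.
Qed.

Lemma state_upd w (i : 'I_#|T|) c :
  rf_state e I0 (upd w i c) i.+1 = step (rf_state e I0 w i) c.
Proof.
rewrite state_S state_upd_le //; congr step.
by apply/ffunP => -[u v]; rewrite !ffunE /= coin_ord ffunE /= eqxx.
Qed.

End Proc.

Section Prob.
Variables (R : realType) (T : finType) (p : R).
Hypotheses (p0 : 0 <= p) (p1 : p <= 1).

Definition wt (b : bool) : R := if b then p else 1 - p.
Lemma wt_ge0 b : 0 <= wt b.
Proof. by case: b => /=; rewrite ?subr_ge0. Qed.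

Lemma sum_prod (K : finType) (g : K -> bool -> R) :
  \sum_(c : {ffun K -> bool}) \prod_k g k (c k) = \prod_k (g k true + g k false).
Proof. by rewrite -bigA_distr_bigA; apply: eq_bigr => k _; rewrite big_bool. Qed.

Definition lw (c : {ffun T * T -> bool}) : R := \prod_x wt (c x).
Lemma lw_ge0 c : 0 <= lw c.
Proof. by apply: prodr_ge0 => x _; apply: wt_ge0. Qed.
Lemma lw_sum : \sum_c lw c = 1.
Proof. by rewrite /lw (sum_prod (fun _ b => wt b)) big1 // => x _ /=; rewrite addrC subrK. Qed.

Lemma W_ge0 (w : outcome T) : 0 <= rf_weight p w.
Proof. by apply: prodr_ge0 => x _; apply: wt_ge0. Qed.

Lemma W_split (w : outcome T) (i : 'I_#|T|) : rf_weight p w = lw (layi w i) * \prod_(k | k.1.1 != i) wt (w k).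
Proof.
rewrite /rf_weight (bigID (fun k : 'I_#|T| * T * T => k.1.1 == i)) /=; congr (_ * _).
rewrite (reindex_onto (fun x : T * T => (i, x.1, x.2)) (fun k => (k.1.2, k.2))) /=.
  by rewrite /lw; apply: eq_big => [[u v]|[u v] _]; rewrite ?ffunE //= !eqxx.
by move=> [[j u] v] /= /eqP ->.
Qed.

Lemma W_upd (w : outcome T) (i : 'I_#|T|) c : rf_weight p (upd w i c) * lw (layi w i) = rf_weight p w * lw c.
Proof.
rewrite (W_split (upd w i c) i) (W_split w i) layi_upd.
have -> : \prod_(k | k.1.1 != i) wt (upd w i c k) = \prod_(k | k.1.1 != i) wt (w k).
  by apply: eq_bigr => k /negbTE hk; rewrite ffunE hk.
by ring.
Qed.

Lemma layer_sum (i : 'I_#|T|) (H : outcome T -> R) :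
  \sum_w rf_weight p w * H w =
  \sum_w rf_weight p w * \sum_c lw c * H (upd w i c).
Proof.
pose phi (wc : outcome T * {ffun T * T -> bool}) := (upd wc.1 i wc.2, layi wc.1 i).
have phiK : cancel phi phi by move=> [w c]; rewrite /phi /= upd_upd layi_upd.
transitivity (\sum_w \sum_c rf_weight p w * lw c * H w).
  by apply: eq_bigr => w _; rewrite -big_distrl -big_distrr /= lw_sum mulr1.
symmetry; transitivity (\sum_w \sum_c rf_weight p w * lw c * H (upd w i c)).
  apply: eq_bigr => w _; rewrite big_distrr; apply: eq_bigr => c _; by rewrite /= mulrA.
rewrite !pair_big /= (reindex_inj (can_inj phiK)) /=.
apply: eq_bigr => -[w c] _ /=; rewrite upd_upd.
by rewrite W_upd.
Qed.

Variable (e : rel T).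

Lemma step_exp (a : R) (s : T -> sir) : 1 <= a ->
  \sum_c lw c * a ^+ cntI (step e s c) <= (1 + p * (a - 1)) ^+ kS e s.
Proof.
move=> a1.
apply: (@le_trans _ _ (\sum_c lw c * a ^+ (\sum_x (inS e s x && c x)))).
  apply: ler_sum => c _; apply: ler_wpM2l; first exact: lw_ge0.
  exact: (ler_weXn2l a1 (cntI_step e s c)).
rewrite (eq_bigr (fun c : {ffun T * T -> bool} => \prod_x (wt (c x) * a ^+ (inS e s x && c x)))); last first.
  by move=> c _; rewrite big_split /= expr_sum.
rewrite (sum_prod (fun x b => wt b * a ^+ (inS e s x && b))) /kS expr_sum.
rewrite le_eqVlt; apply/orP; left; apply/eqP; apply: eq_bigr => x _ /=.
by case: (inS e s x); rewrite /= ?expr0 ?expr1 /wt; ring.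
Qed.

Lemma marg (x : T * T) : \sum_c lw c * (c x)%:R = p.
Proof.
rewrite (eq_bigr (fun c : {ffun T * T -> bool} => \prod_k (wt (c k) * (if k == x then (c k)%:R else 1)))); last first.
  move=> c _; rewrite big_split /=; congr (_ * _).
  by rewrite -big_mkcond /= big_pred1_eq.
rewrite (sum_prod (fun k b => wt b * (if k == x then b%:R else 1))).
rewrite (bigD1 x) //= eqxx big1 ?mulr1 /=; first by rewrite /wt; ring.
by move=> k /negbTE ->; rewrite !mulr1 addrC subrK.
Qed.

Lemma step_lin (s : T -> sir) :
  \sum_c lw c * (cntI (step e s c))%:R <= p * (kS e s)%:R.
Proof.
apply: (@le_trans _ _ (\sum_c lw c * (\sum_x (inS e s x && c x) : nat)%:R)).
  apply: ler_sum => c _; apply: ler_wpM2l; first exact: lw_ge0.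
  by rewrite ler_nat; apply: cntI_step.
rewrite (eq_bigr (fun c : {ffun T * T -> bool} => \sum_x (inS e s x)%:R * (lw c * (c x)%:R))); last first.
  move=> c _; rewrite natr_sum big_distrr /=; apply: eq_bigr => x _.
  by case: (inS e s x); case: (c x); rewrite /= ?mulr0 ?mul0r ?mul1r.
rewrite exchange_big /= /kS natr_sum big_distrr /=; rewrite le_eqVlt; apply/orP; left.
apply/eqP; apply: eq_bigr => x _; by rewrite -big_distrr /= marg mulrC.
Qed.

End Prob.

Section Main.
Variables (R : realType) (T : finType) (e : rel T) (I0 : {set T}) (p : R) (d : nat).
Hypotheses (p0 : 0 <= p) (p1 : p <= 1).
Hypotheses (d2 : (2 <= d)%N) (esym : symmetric e)
  (deg : forall v : T, (#|[set u | e v u]| <= d)%N).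

Definition Ex (f : outcome T -> R) := \sum_w rf_weight p w * f w.

Lemma W_sum : \sum_(w : outcome T) rf_weight p w = 1.
Proof.
rewrite /rf_weight (sum_prod (fun _ b => wt p b)) big1 // => k _.
by rewrite /wt addrC subrK.
Qed.

Lemma Ex_const k : Ex (fun _ => k) = k.
Proof. by rewrite /Ex -big_distrl /= W_sum mul1r. Qed.

Lemma Ex_le f g : (forall w, f w <= g w) -> Ex f <= Ex g.
Proof. by move=> h; apply: ler_sum => w _; apply: ler_wpM2l; [apply: W_ge0|]. Qed.

Lemma Ex_sub f g : Ex (fun w => f w - g w) = Ex f - Ex g.
Proof. by rewrite /Ex -sumrB; apply: eq_bigr => w _; rewrite mulrBr. Qed.

Lemma Ex_scale k f : Ex (fun w => k * f w) = k * Ex f.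
Proof. by rewrite /Ex big_distrr; apply: eq_bigr => w _ /=; rewrite mulrCA. Qed.

Lemma Ex_step (i : 'I_#|T|) (F : (T -> sir) -> R) :
  Ex (fun w => F (rf_state e I0 w i.+1)) =
  Ex (fun w => \sum_c lw p c * F (step e (rf_state e I0 w i) c)).
Proof.
rewrite /Ex (layer_sum p i); apply: eq_bigr => w _; congr (_ * _).
by apply: eq_bigr => c _; rewrite state_upd.
Qed.

Lemma Ex_stepn t (ht : (t < #|T|)%N) (F : (T -> sir) -> R) :
  Ex (fun w => F (rf_state e I0 w t.+1)) =
  Ex (fun w => \sum_c lw p c * F (step e (rf_state e I0 w t) c)).
Proof. exact: (Ex_step (Ordinal ht) F). Qed.

Lemma prob_Ex (E : pred (outcome T)) : rf_prob p E = Ex (fun w => (E w)%:R).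
Proof.
rewrite /rf_prob /Ex big_mkcond /=; apply: eq_bigr => w _.
by case: (E w); rewrite ?mulr1 ?mulr0.
Qed.

Lemma cntI0 : cntI (fun v => if v \in I0 then Inf else Sus) = #|I0|.
Proof.
rewrite /cntI -sum1_card [RHS]big_mkcond /=; apply: eq_bigr => v _.
by case: (v \in I0).
Qed.

Lemma cntR0 : cntR (fun v => if v \in I0 then Inf else Sus) = 0%N.
Proof. by rewrite /cntR big1 // => v _ /=; case: (v \in I0). Qed.


Lemma pow_mono (x y : R) n : 0 <= x -> x <= y -> x ^+ n <= y ^+ n.
Proof. move=> x0 xy; apply: lerXn2r; rewrite ?inE ?nnegrE //; exact: le_trans xy. Qed.

Definition Phi (s a : R) (sg : T -> sir) := s ^+ cntR sg * a ^+ cntI sg.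

Lemma q_ge1 a : 1 <= a -> 1 <= 1 + p * (a - 1).
Proof. by move=> a1; rewrite lerDl mulr_ge0 // subr_ge0. Qed.

Lemma Phi_step_gen s a sg k : 1 <= s -> 1 <= a -> (kS e sg <= k)%N ->
  \sum_c lw p c * Phi s a (step e sg c) <=
  s ^+ (cntR sg + cntI sg) * (1 + p * (a - 1)) ^+ k.
Proof.
move=> s1 a1 hk; rewrite /Phi.
rewrite (eq_bigr (fun c : {ffun T * T -> bool} => s ^+ (cntR sg + cntI sg) *
   (lw p c * a ^+ cntI (step e sg c)))); last by move=> c _; rewrite cntR_step mulrCA.
rewrite -big_distrr /=; apply: ler_wpM2l; first by rewrite exprn_ge0 // (le_trans ler01).
apply: le_trans (step_exp p0 p1 e sg a1) _.
by apply: ler_weXn2l => //; apply: q_ge1.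
Qed.

Lemma Phi_step s a sg : 1 <= s -> 1 <= a ->
  s * (1 + p * (a - 1)) ^+ d.-1 <= a -> inv e sg ->
  \sum_c lw p c * Phi s a (step e sg c) <= Phi s a sg.
Proof.
move=> s1 a1 hsa hinv.
apply: le_trans (Phi_step_gen s1 a1 (kS_le_inv deg hinv)) _.
rewrite /Phi exprD -mulrA exprM -exprMn; apply: ler_wpM2l.
  by rewrite exprn_ge0 // (le_trans ler01).
apply: pow_mono => //; rewrite mulr_ge0 ?exprn_ge0 //; apply: (le_trans ler01) => //.
exact: q_ge1.
Qed.

Lemma inv_state (w : outcome T) t : inv e (rf_state e I0 w t.+1).
Proof. by rewrite state_S; apply: inv_step. Qed.

Lemma EPhi s a t : 1 <= s -> 1 <= a ->
  s * (1 + p * (a - 1)) ^+ d.-1 <= a -> (t.+1 <= #|T|)%N ->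
  Ex (fun w => Phi s a (rf_state e I0 w t.+1)) <= (s * a ^+ 2) ^+ #|I0|.
Proof.
move=> s1 a1 hsa; elim: t => [|t IH] h.
  have := Ex_step (Ordinal h) (Phi s a); rewrite /= => ->.
  rewrite -[X in _ <= X]Ex_const; apply: Ex_le => w.
  apply: le_trans (Phi_step_gen s1 a1 (kS_le deg _)) _.
  rewrite cntR0 cntI0 add0n exprMn; apply: ler_wpM2l; first by rewrite exprn_ge0 // (le_trans ler01).
  rewrite exprM.
apply: pow_mono; first by rewrite exprn_ge0 //; apply: (le_trans ler01); exact: q_ge1.
  have qd : (1 + p * (a - 1)) ^+ d.-1 <= a.
    apply: le_trans hsa; rewrite ler_peMl // ?exprn_ge0 //; apply: (le_trans ler01); exact: q_ge1.
  apply: (@le_trans _ _ ((1 + p * (a - 1)) ^+ (d.-1 * 2))).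
    apply: ler_weXn2l; first exact: q_ge1.
    by move: d2; clear; case: d => [|[|dd]] // _; lia.
  rewrite exprM; apply: pow_mono => //; rewrite exprn_ge0 //; apply: (le_trans ler01); exact: q_ge1.
apply: le_trans (IH (ltnW h)).
have := Ex_step (Ordinal h) (Phi s a); rewrite /= => ->.
apply: Ex_le => w; apply: Phi_step => //; exact: inv_state.
Qed.

Lemma leR_eq (x y : R) : x = y -> x <= y.
Proof. by move=> ->. Qed.

Lemma EI t : (t.+1 <= #|T|)%N ->
  Ex (fun w => (cntI (rf_state e I0 w t.+1))%:R) <= 2 * #|I0|%:R * (p * d.-1%:R) ^+ t.+1.
Proof.
elim: t => [|t IH] h.
  have := Ex_step (Ordinal h) (fun s => (cntI s)%:R); rewrite /= => ->.
  rewrite -[X in _ <= X]Ex_const; apply: Ex_le => w.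
  apply: le_trans (step_lin p0 p1 e _) _.
  have hk := kS_le deg (fun v => if v \in I0 then Inf else Sus); rewrite cntI0 in hk.
  have hk2 : (kS e (fun v => if v \in I0 then Inf else Sus) <= 2 * d.-1 * #|I0|)%N.
    apply: leq_trans hk _; rewrite leq_mul2r; apply/orP; right.
    by move: d2; clear; case: d => [|[|dd]] // _; lia.
  move: hk2; rewrite -(ler_nat R) !natrM expr1 => hk2.
  apply: le_trans (ler_wpM2l p0 hk2) _; apply: leR_eq; ring.
apply: le_trans (_ : _ <= Ex (fun w => p * d.-1%:R * (cntI (rf_state e I0 w t.+1))%:R)) _.
  rewrite (Ex_stepn h (fun s => (cntI s)%:R)).
  apply: Ex_le => w; apply: le_trans (step_lin p0 p1 e _) _.
  rewrite -mulrA; apply: ler_wpM2l => //; rewrite -natrM ler_nat.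
  apply: (kS_le_inv deg); exact: inv_state.
rewrite Ex_scale; apply: le_trans (ler_wpM2l _ (IH (ltnW h))) _.
  by rewrite mulr_ge0.
by apply: leR_eq; rewrite [in RHS]exprS; ring.
Qed.

End Main.

Section Det.
Variables (T : finType) (e : rel T) (I0 : {set T}).

Lemma nonsus_S (w : outcome T) t v :
  rf_state e I0 w t v != Sus -> rf_state e I0 w t.+1 v != Sus.
Proof. by rewrite state_S /step; case: (rf_state e I0 w t v). Qed.

Lemma nonsus_le (w : outcome T) t t' v : (t <= t')%N ->
  rf_state e I0 w t v != Sus -> rf_state e I0 w t' v != Sus.
Proof.
move=> /subnK <-; elim: (t' - t)%N => [//|k IH] h.
by rewrite addSn; apply: nonsus_S; apply: IH.
Qed.

Lemma ever_le (w : outcome T) :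
  (#|rf_ever_infected e I0 w| <= cntN (rf_state e I0 w #|T|))%N.
Proof.
rewrite /cntN -sum1_card big_mkcond /=; apply: leq_sum => v _.
rewrite inE; case: existsP => // -[t /eqP ht].
suff -> : rf_state e I0 w #|T| v != Sus by [].
apply: (nonsus_le (t := t)); first by rewrite -ltnS ltn_ord.
by rewrite ht.
Qed.

Lemma cntN_RI (s : T -> sir) : (cntN s <= cntR s + cntI s)%N.
Proof.
rewrite /cntN /cntR /cntI -big_split /=; apply: leq_sum => v _.
by case: (s v).
Qed.

Lemma cntN_le (s : T -> sir) : (cntN s <= #|T|)%N.
Proof.
rewrite /cntN -sum1_card; apply: leq_sum => v _; by case: (_ != _).
Qed.

Lemma notstop_I (s : T -> sir) : ~~ [forall v, s v != Inf] -> (0 < cntI s)%N.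
Proof.
rewrite negb_forall => /existsP [v]; rewrite negbK => /eqP hv.
by rewrite /cntI (bigD1 v) //= hv eqxx.
Qed.

Lemma stop_S (w : outcome T) t :
  rf_stopped e I0 w t -> rf_stopped e I0 w t.+1.
Proof.
move=> /forallP h; apply/forallP => v; rewrite state_S /step.
case: (rf_state e I0 w t v) => //; case: ifP => // /existsP [u /and3P [hu _ _]].
by move: (h u); rewrite hu.
Qed.

Lemma notstop_cnt (w : outcome T) t :
  ~~ rf_stopped e I0 w t -> (t < cntN (rf_state e I0 w t))%N.
Proof.
elim: t => [|t IH] h.
  by apply: leq_trans (notstop_I h) (cntIN _).
have h' : ~~ rf_stopped e I0 w t by apply: contra h; apply: stop_S.
have := cntN_step e (rf_state e I0 w t) (lay w t); rewrite -state_S.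
have := notstop_I h; have := IH h'; lia.
Qed.

Lemma always_stop (w : outcome T) : rf_stopped e I0 w #|T|.
Proof.
apply/negPn/negP => h; have := notstop_cnt h; have := cntN_le (rf_state e I0 w #|T|).
lia.
Qed.

End Det.

From mathcomp Require Import sequences.

Theorem mainTheorem3 (R : realType) (eps : R) :
  0 < eps ->
  exists C : R, 0 < C /\
  exists c : R, 0 < c /\
  exists n0 : nat,
  forall (d : nat) (T : finType) (e : rel T) (p : R) (I0 : {set T}),
    (2 <= d)%N ->
    symmetric e -> irreflexive e ->
    (forall v : T, #|[set u | e v u]| <= d)%N ->
    0 <= p -> p < (1 - eps) / (d.-1)%:R ->
    I0 != set0 ->
    (n0 <= #|T|)%N ->
    1 - (#|T|%:R : R) `^ (- c) <= rf_prob p (rf_good e I0 C).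
Proof.
move=> eps0.
pose C : R := 6 / eps ^+ 3 + 3 / eps.
have C0 : 0 < C by rewrite /C addr_gt0 // divr_gt0 // exprn_gt0.
exists C; split => //.
exists 1; split => //.
pose K0 : R := expR 3 + 2 * expR 1 + 2.
have K00 : 0 <= K0 by rewrite /K0; have := expR_gt0 (3 : R); have := expR_gt0 (1 : R); lra.
exists (Num.truncn K0).+1.
move=> d T e p I0 d2 esym irr deg p0 hp hI0 hn.
have D1 : 1 <= d.-1%:R :> R by rewrite ler1n; move: d2; clear; lia.
have D0 : 0 < d.-1%:R :> R by apply: lt_le_trans D1; apply: ltr01.
have hrho : p * d.-1%:R < 1 - eps by rewrite -ltr_pdivlMr.
have pD0 : 0 <= p * d.-1%:R by rewrite mulr_ge0 // ltW.
have eps1 : eps < 1 by lra.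
have p1 : p <= 1 by nra.
have hN : K0 < #|T|%:R by rewrite -truncn_lt_nat.
set N : R := #|T|%:R.
set L := ln N.
have N0 : 0 < N by exact: le_lt_trans K00 hN.
have eN : expR L = N by rewrite /L lnK // inE posrE.
have e1 := expR_gt0 (1 : R).
have e3 := expR_gt0 (3 : R).
have L1 : 1 <= L by rewrite -ler_expR eN; rewrite /K0 in hN; lra.
pose x := N^-1.
have xL : expR (- L) = x by rewrite expRN eN.
have x0 : 0 < x by rewrite invr_gt0.
have xN : x * N = 1 by rewrite mulVf // gt_eqF.
have xK : x * K0 <= 1 by rewrite -xN; apply: ler_wpM2l; [apply: ltW|apply: ltW].
have x1 : x <= 1 by rewrite /K0 in xK; nra.
pose a := 1 + eps.
pose sg := eps * eps * eps / 2.
pose s := expR sg.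
have sg0 : 0 <= sg by rewrite /sg; apply: divr_ge0 => //; rewrite !mulr_ge0 // ltW.
have s1 : 1 <= s by apply: le_trans (expR_ge1Dx sg); lra.
have a1 : 1 <= a by rewrite /a; lra.
have am1 : a - 1 = eps by rewrite /a; ring.
have hsa : s * (1 + p * (a - 1)) ^+ d.-1 <= a.
  rewrite am1.
  have q1 : (1 + p * eps) ^+ d.-1 <= expR ((1 - eps) * eps).
    apply: (@le_trans _ _ (expR (p * eps) ^+ d.-1)).
      apply: pow_mono; first by rewrite addr_ge0 // mulr_ge0 // ltW.
      exact: expR_ge1Dx.
    rewrite -expRM_natl ler_expR; nra.
  apply: (@le_trans _ _ (s * expR ((1 - eps) * eps))).
    by apply: ler_wpM2l => //; apply: (le_trans ler01).
  rewrite /s -expRD.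
  set X := sg + (1 - eps) * eps.
  have yz := expRxMexpNx_1 X.
  have z1 := expR_ge1Dx (- X).
  have h4 : 0 <= eps * eps * eps * (1 - eps).
    by rewrite !mulr_ge0 ?subr_ge0 // ?ltW.
  have hp1 : 1 <= (1 + eps) * (1 - X).
    have -> : (1 + eps) * (1 - X) = 1 + eps * eps * eps * (1 - eps) / 2.
      by rewrite /X /sg; field.
    by rewrite lerDl divr_ge0.
  have y0 := expR_gt0 X.
  have h1 : 0 <= expR X * ((1 + eps) * (1 - X) - 1) by rewrite mulr_ge0 ?subr_ge0 // ltW.
  have h2 : 0 <= expR X * (1 + eps) * (expR (- X) - (1 - X)).
    apply: mulr_ge0; [apply: mulr_ge0; [exact: ltW|lra] | rewrite subr_ge0; lra].
  have h3 : eps * (expR X * expR (- X)) = eps by rewrite yz mulr1.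
  rewrite /a; nra.
have C1 : 1 <= C.
  have : 1 <= 3 / eps by rewrite ler_pdivlMr //; lra.
  have : 0 <= 6 / eps ^+ 3 by rewrite divr_ge0 // exprn_ge0 // ltW.
  rewrite /C; lra.
have epsC : 3 <= eps * C.
  have -> : eps * C = 3 + 6 / (eps * eps) by rewrite /C; field; rewrite gt_eqF.
  by rewrite lerDl divr_ge0 // mulr_ge0 // ltW.
have sgC : 3 <= sg * C.
  have -> : sg * C = 3 + 3 * eps * eps / 2 by rewrite /sg /C; field; rewrite gt_eqF.
  by rewrite lerDl divr_ge0 // !mulr_ge0 // ltW.
have nI0 : (1 <= #|I0|)%N by rewrite card_gt0.
have nT : (0 < #|T|)%N by apply: leq_trans nI0 (max_card _).
rewrite powR_inv1; last exact: ltW.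
rewrite prob_Ex.
pose G1 (w : outcome T) := [exists t : 'I_#|T|.+1,
      ((nat_of_ord t)%:R <= C * ln (#|T|%:R : R)) && rf_stopped e I0 w t].
pose G2 (w : outcome T) := ((#|rf_ever_infected e I0 w|%:R : R) <= C * #|I0|%:R * ln (#|T|%:R : R)).
have gb : forall b1 b2 : bool, 1 - (~~ b1)%:R - (~~ b2)%:R <= (b1 && b2)%:R :> R.
  by case; case => /=; lra.
have bnd : forall w, 1 - (~~ G1 w)%:R - (~~ G2 w)%:R <= (rf_good e I0 C w)%:R :> R.
  by move=> w; apply: gb.
apply: le_trans (Ex_le p0 p1 bnd); rewrite !Ex_sub Ex_const.
have Phi0 : forall sg' : T -> sir, 0 <= Phi s a sg'.
  by move=> sg'; rewrite /Phi; apply: mulr_ge0; apply: exprn_ge0; apply: (le_trans ler01).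
pose K := C * #|I0|%:R * L.
have B2 : Ex p (fun w => (~~ G2 w)%:R) <= expR 3 * (x * x * x).
  have pw : forall w, (~~ G2 w)%:R <= expR (- (sg * K)) * Phi s a (rf_state e I0 w #|T|).
    move=> w; rewrite /G2 -/N -/L -/K.
    case: (boolP (_ <= K)) => h /=; first by rewrite mulr_ge0 ?expR_ge0.
    move: h; rewrite -ltNge => h.
    set sw := rf_state e I0 w #|T|.
    have hZ : K < (cntN sw)%:R.
      by apply: lt_le_trans h _; rewrite ler_nat; apply: ever_le.
    have hP : s ^+ cntN sw <= Phi s a sw.
      apply: (@le_trans _ _ (s ^+ (cntR sw + cntI sw))).
        by apply: ler_weXn2l => //; apply: cntN_RI.
      rewrite exprD /Phi; apply: ler_wpM2l; first by rewrite exprn_ge0 // (le_trans ler01).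
      apply: pow_mono; first exact: (le_trans ler01).
      move: hsa; apply: le_trans; apply: ler_peMr; [exact: (le_trans ler01) | apply: exprn_ege1; exact: q_ge1].
    apply: (@le_trans _ _ (expR (- (sg * K)) * s ^+ cntN sw)); last first.
      by apply: ler_wpM2l => //; apply: expR_ge0.
    rewrite /s -expRM_natl -expRD.
    apply: le_trans (expR_ge1Dx _); rewrite lerDl.
    rewrite -mulrN mulrC -mulrDl; apply: mulr_ge0 => //; lra.
  apply: le_trans (Ex_le p0 p1 pw) _; rewrite Ex_scale.
  have hE := EPhi I0 p0 p1 d2 esym deg (t := #|T|.-1) s1 a1 hsa; rewrite prednK // in hE.
  apply: le_trans (ler_wpM2l (expR_ge0 _) (hE (leqnn _))) _.
  have sa3 : s * a ^+ 2 <= expR 3.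
    have se : s <= expR 1 by rewrite ler_expR /sg; nra.
    have ae : a <= expR 1 by apply: le_trans (expR_ge1Dx eps) _; rewrite ler_expR ltW.
    have -> : expR 3 = expR 1 ^+ 3 :> R by rewrite -(expRM_natl 3 1) mulr1.
    have s0 : 0 <= s by apply: (le_trans ler01).
    have a0 : 0 <= a by apply: (le_trans ler01).
    rewrite expr2 !exprS expr0 mulr1; rewrite mulrA.
    rewrite -mulrA; apply: ler_pM; rewrite ?mulr_ge0 //; exact: ler_pM.
  apply: (@le_trans _ _ (expR (- (sg * K)) * expR 3 ^+ #|I0|)).
    by apply: ler_wpM2l; [apply: expR_ge0 | apply: pow_mono; [rewrite mulr_ge0 ?exprn_ge0 // (le_trans ler01)|]].
  rewrite -expRM_natl -expRD.
  have -> : expR 3 * (x * x * x) = expR (3 - 3 * L).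
    by rewrite -xL -!expRD; congr expR; ring.
  rewrite ler_expR /K.
  have m1 : 1 <= #|I0|%:R :> R by rewrite ler1n.
  have hh : 0 <= (#|I0|%:R - 1) * (sg * C * L - 3) by rewrite mulr_ge0 // subr_ge0; nra.
  nra.
have CL0 : 0 <= C * L by rewrite mulr_ge0 // ltW //; lra.
have B1 : Ex p (fun w => (~~ G1 w)%:R) <= 2 * expR 1 * (x * x).
  case: (ltnP (Num.truncn (C * L)) #|T|) => ht; last first.
    have hn' : #|T|%:R <= C * L by rewrite -truncn_ge_nat.
    apply: (@le_trans _ _ (Ex p (fun _ => 0))).
      apply: Ex_le => // w.
      suff -> : G1 w by [].
      apply/existsP; exists ord_max; rewrite /= -/N -/L hn' /=.
      exact: always_stop.
    by rewrite Ex_const !mulr_ge0 // ?ltW.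
  have CL1 : 1 <= C * L by nra.
  have tpos : (0 < Num.truncn (C * L))%N by rewrite truncn_gt_nat.
  have titv := truncn_itv CL0.
  move: ht titv tpos; case: (Num.truncn (C * L)) => [//|t'] ht titv _.
  have ind : forall w, (~~ G1 w)%:R <= (cntI (rf_state e I0 w t'.+1))%:R :> R.
    move=> w; case: (boolP (rf_stopped e I0 w t'.+1)) => hs.
      have -> : G1 w.
        apply/existsP; exists (Ordinal (leqW ht)); rewrite /= hs andbT -/N -/L.
        by case/andP: titv.
      by rewrite /= ler0n.
    have := notstop_I hs; case: (~~ G1 w) => /= h; last by rewrite ler0n.
    by rewrite ler1n.
  apply: le_trans (Ex_le p0 p1 ind) _.
  apply: le_trans (EI I0 p0 p1 d2 esym deg (ltnW ht)) _.
  have m_le : #|I0|%:R <= N by rewrite ler_nat max_card.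
  have r1 : (p * d.-1%:R) ^+ t'.+1 <= expR (- eps) ^+ t'.+1.
    by apply: pow_mono => //; apply: le_trans (expR_ge1Dx _); lra.
  rewrite -expRM_natl in r1.
  have r2 : expR (t'.+1%:R * - eps) <= expR (1 - 3 * L).
    rewrite ler_expR; case/andP: titv => _; rewrite -natr1 => h; nra.
  apply: (@le_trans _ _ (2 * N * expR (1 - 3 * L))).
    apply: ler_pM; rewrite ?mulr_ge0 ?exprn_ge0 //; last exact: le_trans r1 r2.
    by rewrite ler_pM2l.
  have -> : expR (1 - 3 * L) = expR 1 * (x * x * x).
    by rewrite -xL -!expRD; congr expR; ring.
  have -> : 2 * N * (expR 1 * (x * x * x)) = 2 * expR 1 * (x * x) * (x * N) by ring.
  by rewrite xN mulr1.
have hx3 : 0 <= x * x * (1 - x) by rewrite !mulr_ge0 ?subr_ge0 // ltW.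
have hxK : 0 <= x * (1 - x * K0) by rewrite mulr_ge0 ?subr_ge0 // ltW.
have h5 := mulr_ge0 (ltW e3) hx3.
have h6 : 0 <= x * x by rewrite mulr_ge0 // ltW.
rewrite -/x; rewrite /K0 in hxK; nra.
Qed.
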